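(* Let $R$ be a finite local commutative ring, $K\le R^\times$ a pure group, and $\mathcal C=\mathrm{Cyc}(K,R)$. Let $I_0=\{x\in\mathrm{rad}(R): x\,\mathrm{rad}(R)=\{0\}\}$, $U_0=K\cap(1+I_0)$, and let $E_0$ be the equivalence relation on $R$ whose classes are the cosets of $I_0$. Then $\mathcal C_{E_0}\ge\mathrm{Cyc}(U_0,R)$.
   Context: All rings have an identity; $\mathrm{rad}(R)$ is the unique maximal ideal of the local ring $R$. A scheme (coherent configuration) on a finite set $V$ is a pair $(V,\mathcal R)$ where $\mathcal R$ is a partition of $V\times V$ into nonempty relations, closed under transposition, such that the diagonal $\Delta(V)$ is a union of members of $\mathcal R$, and for $R_1,R_2,T\in\mathcal R$ the number $|\{y:(x,y)\in R_1,(y,z)\in R_2\}|$ is the same for all $(x,z)\in T$. Elements of $\mathcal R$ are basis relations; unions of them are relations ($\mathcal R^*$). For schemes on $V$, $\mathcal C\le\mathcal C'$ means every relation of $\mathcal C$ is a relation of $\mathcal C'$. For an equivalence relation $E$ on $V$, $\mathcal C_E$ is the smallest scheme on $V$ that is $\ge\mathcal C$ and has $\Delta(X)=\{(x,x):x\in X\}$ as a relation for every class $X$ of $E$. For $K\le R^\times$, $\mathrm{Cyc}(K,R)$ is the scheme on $R$ whose basis relations are $\{(x,y): y-x\in rK\}$, $r\in R$. A group $K\le R^\times$ is pure if the only ideal $I$ of $R$ with $1+I\subseteq K$ is $I=\{0\}$. *)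

(* Defs.v *)
From HB Require Import structures.
From mathcomp Require Import all_boot all_order all_algebra all_fingroup.
Set Implicit Arguments. Unset Strict Implicit. Unset Printing Implicit Defensive.
Import GRing.Theory.
Local Open Scope ring_scope.

Section Schemes.
Variable V : finType.

Definition diag_on (X : {set V}) : {set V * V} := [set (x, x) | x in X].

Definition transp (S : {set V * V}) : {set V * V} := [set p | (p.2, p.1) \in S].

Definition is_relation (P : {set {set V * V}}) (S : {set V * V}) : Prop :=
  exists2 Q : {set {set V * V}}, Q \subset P & S = cover Q.

Definition is_scheme (P : {set {set V * V}}) : Prop :=
  [/\ partition P [set: V * V],
      (forall S, S \in P -> transp S \in P),
      is_relation P (diag_on [set: V]) &
      (forall R1 R2 T, R1 \in P -> R2 \in P -> T \in P ->
        forall x z x' z', (x, z) \in T -> (x', z') \in T ->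
          #|[set y | ((x, y) \in R1) && ((y, z) \in R2)]| =
          #|[set y | ((x', y) \in R1) && ((y, z') \in R2)]|)].

Definition scheme_le (C C' : {set {set V * V}}) : Prop :=
  forall S, is_relation C S -> is_relation C' S.

Definition ext_by_classes (C : {set {set V * V}}) (E : rel V)
  (C' : {set {set V * V}}) : Prop :=
  [/\ is_scheme C', scheme_le C C' &
      forall x : V, is_relation C' (diag_on [set y | E x y])].

(* C_E >= D, where C_E is the smallest scheme in ext_by_classes C E:
   equivalently, D <= C' for every scheme C' in ext_by_classes C E. *)
Definition CE_ge (C : {set {set V * V}}) (E : rel V) (D : {set {set V * V}}) : Prop :=
  forall C', ext_by_classes C E C' -> scheme_le D C'.

End Schemes.

Section Rings.
Variable R : finComUnitRingType.

Definition is_ideal (I : {set R}) : Prop :=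
  [/\ 0 \in I, (forall x y, x \in I -> y \in I -> x + y \in I) &
      (forall r x, x \in I -> r * x \in I)].

Definition is_maximal_ideal (M : {set R}) : Prop :=
  [/\ is_ideal M, M != [set: R] &
      forall J, is_ideal J -> M \subset J -> J = M \/ J = [set: R]].

Definition pure (K : {set {unit R}}) : Prop :=
  forall I : {set R}, is_ideal I ->
    (forall x, x \in I -> exists2 u, u \in K & val u = 1 + x) -> I = [set 0].

Definition cyc (K : {set {unit R}}) : {set {set R * R}} :=
  [set [set p : R * R | p.2 - p.1 \in [set r * val k | k in K]] | r : R].

Definition I0 (M : {set R}) : {set R} :=
  [set x in M | [forall m in M, x * m == 0]].

Definition U0 (K : {set {unit R}}) (M : {set R}) : {set {unit R}} :=
  [set u in K | val u - 1 \in I0 M].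

Definition E0 (M : {set R}) : rel R := fun x y => y - x \in I0 M.

End Rings.

(* Main.v *)
Require Import Defs.
From mathcomp Require Import all_boot all_order all_algebra all_fingroup.
From mathcomp Require Import ring.
Set Implicit Arguments. Unset Strict Implicit. Unset Printing Implicit Defensive.
Import GRing.Theory.
Local Open Scope ring_scope.

Section Gen.
Variable V : finType.
Implicit Types (P : {set {set V * V}}) (S B : {set V * V}).

Lemma in_coverP P p : partition P [set: V * V] -> exists2 B, B \in P & p \in B.
Proof.
case/and3P=> /eqP Hc _ _.
have : p \in cover P by rewrite Hc inE.
by case/bigcupP=> B HB HpB; exists B.
Qed.

Lemma rel_setT P : partition P [set: V * V] -> is_relation P [set: V * V].
Proof. by case/and3P=> /eqP Hc _ _; exists P. Qed.

Lemma rel_basis P S B p : partition P [set: V * V] -> is_relation P S ->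
  B \in P -> p \in B -> p \in S -> B \subset S.
Proof.
case/and3P=> _ /trivIsetP Ht _ [Q HQ ->] HB HpB /bigcupP [B' HB' HpB'].
have [->|Hne] := eqVneq B B'; first exact: bigcup_sup.
have := Ht B B' HB (subsetP HQ _ HB') Hne.
by move/disjoint_setI0/setP/(_ p); rewrite !inE HpB HpB'.
Qed.

Lemma rel_crit P S : partition P [set: V * V] ->
  (forall B, B \in P -> forall p q, p \in B -> q \in B -> p \in S -> q \in S) ->
  is_relation P S.
Proof.
move=> Hp H; exists [set B in P | B \subset S].
  by apply/subsetP=> B; rewrite inE => /andP[].
apply/setP=> p; apply/idP/bigcupP.
  move=> HpS; have [B HB HpB] := in_coverP p Hp.
  exists B => //; rewrite inE HB; apply/subsetP=> q Hq; exact: H HpB Hq HpS.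
by case=> B; rewrite inE => /andP[_ /subsetP]; apply.
Qed.

Lemma exist_comp P A1 A2 B x z x' z' w : is_scheme P ->
  is_relation P A1 -> is_relation P A2 -> B \in P ->
  (x, z) \in B -> (x', z') \in B -> (x, w) \in A1 -> (w, z) \in A2 ->
  exists w', (x', w') \in A1 /\ (w', z') \in A2.
Proof.
case=> Hp _ _ Hc HA1 HA2 HB Hxz Hxz' Hxw Hwz.
have [R1 HR1 H1] := in_coverP (x, w) Hp.
have [R2 HR2 H2] := in_coverP (w, z) Hp.
have S1 := rel_basis Hp HA1 HR1 H1 Hxw.
have S2 := rel_basis Hp HA2 HR2 H2 Hwz.
have := Hc R1 R2 B HR1 HR2 HB x z x' z' Hxz Hxz'.
have : w \in [set y | ((x, y) \in R1) && ((y, z) \in R2)] by rewrite inE H1 H2.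
move=> Hw Heq.
have : (0 < #|[set y | ((x', y) \in R1) && ((y, z') \in R2)]|)%N.
  by rewrite -Heq card_gt0; apply/set0Pn; exists w.
rewrite card_gt0 => /set0Pn [w' ]; rewrite inE => /andP[Ha Hb].
by exists w'; split; [apply: (subsetP S1) | apply: (subsetP S2)].
Qed.

End Gen.

Section Loc.
Variable R : finComUnitRingType.
Variable M : {set R}.
Hypothesis Hlocal : forall J : {set R}, is_maximal_ideal J <-> J = M.

Definition idealb (J : {set R}) :=
  [&& 0 \in J, [forall x in J, forall y in J, x + y \in J] &
      [forall r, forall x in J, r * x \in J]].

Lemma idealbP J : reflect (is_ideal J) (idealb J).
Proof.
apply: (iffP and3P).
  case=> H0 /forall_inP Ha /forallP Hm; split=> //.
    by move=> x y Hx Hy; exact: (forall_inP (Ha x Hx)).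
  by move=> r x Hx; exact: (forall_inP (Hm r)).
case=> H0 Ha Hm; split=> //.
  by apply/forall_inP=> x Hx; apply/forall_inP=> y Hy; exact: Ha.
by apply/forallP=> r; apply/forall_inP=> x Hx; exact: Hm.
Qed.

Lemma ideal_one J : is_ideal J -> 1 \in J -> J = [set: R].
Proof.
case=> _ _ Hm H1; apply/setP=> x; rewrite inE.
by rewrite -(mulr1 x); exact: Hm.
Qed.

Lemma proper_in_M I : is_ideal I -> 1 \notin I -> I \subset M.
Proof.
move=> HI H1.
pose Pj := fun J : {set R} => [&& idealb J, I \subset J & 1 \notin J].
have PI : Pj I by rewrite /Pj H1 subxx !andbT; apply/idealbP.
case: (@arg_maxnP _ I Pj (fun J : {set R} => #|J|) PI) => J0 /and3P [/idealbP HJ0 HIJ H1J] Hmax.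
suff -> : M = J0 by [].
symmetry; apply: (Hlocal J0).1; split=> //.
  by apply/eqP=> HT; move: H1J; rewrite HT inE.
move=> J HJ HsJ; case H1J': (1 \in J).
  by right; exact: ideal_one.
left; apply/eqP; rewrite eq_sym eqEcard HsJ /=.
apply: Hmax; rewrite /Pj H1J' (subset_trans HIJ HsJ) !andbT; exact/idealbP.
Qed.

Lemma Mid : is_ideal M.
Proof. by case: ((Hlocal M).2 erefl). Qed.

Lemma one_notinM : 1 \notin M.
Proof.
case: ((Hlocal M).2 erefl) => HM /eqP HT _; apply/negP=> H1; apply: HT.
exact: ideal_one.
Qed.

Lemma unit_notinM u : u \is a GRing.unit -> u \notin M.
Proof.
move=> Hu; apply/negP=> HuM; have := one_notinM.
case: Mid => _ _ Hm; by rewrite -(mulVr Hu) Hm.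
Qed.

Lemma nonunit_inM x : ~~ (x \is a GRing.unit) -> x \in M.
Proof.
move=> Hx.
have HI : is_ideal [set r * x | r : R].
  split.
  - by apply/imsetP; exists 0; rewrite ?inE ?mul0r.
  - move=> a b /imsetP [r _ ->] /imsetP [s _ ->].
    by apply/imsetP; exists (r + s); rewrite ?inE ?mulrDl.
  - move=> t a /imsetP [r _ ->].
    by apply/imsetP; exists (t * r); rewrite ?inE ?mulrA.
have H1 : 1 \notin [set r * x | r : R].
  apply/negP=> /imsetP [r _ Hr]; move/negP: Hx; apply.
  by apply/unitrPr; exists r; rewrite mulrC.
apply: (subsetP (proper_in_M HI H1)).
by apply/imsetP; exists 1; rewrite ?inE ?mul1r.
Qed.

Lemma M_add x y : x \in M -> y \in M -> x + y \in M.
Proof. by case: Mid => _ Ha _; exact: Ha. Qed.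

Lemma M_mul s x : x \in M -> s * x \in M.
Proof. by case: Mid => _ _ Hm; exact: Hm. Qed.

Lemma M_opp x : x \in M -> - x \in M.
Proof. by move=> Hx; rewrite -mulN1r; exact: M_mul. Qed.

Lemma sub_unit r u : r \in M -> u \is a GRing.unit -> r - u \is a GRing.unit.
Proof.
move=> Hr Hu; apply/negPn/negP=> /nonunit_inM Hru.
have : u \in M.
  have -> : u = r + - (r - u) by rewrite opprB addrC subrK.
  by apply: M_add => //; exact: M_opp.
by apply/negP; exact: unit_notinM.
Qed.

Lemma I0_M x : x \in I0 M -> x \in M.
Proof. by rewrite inE => /andP[]. Qed.

Lemma I0_mul x m : x \in I0 M -> m \in M -> x * m = 0.
Proof. by rewrite inE => /andP[_ /forall_inP H] Hm; apply/eqP; exact: H. Qed.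

Lemma I0_0 : 0 \in I0 M.
Proof.
rewrite inE; case: Mid => -> _ _ /=; apply/forall_inP=> m _; by rewrite mul0r.
Qed.

Lemma I0_add x y : x \in I0 M -> y \in I0 M -> x + y \in I0 M.
Proof.
move=> Hx Hy; rewrite inE M_add ?I0_M //=; apply/forall_inP=> m Hm.
by rewrite mulrDl (I0_mul Hx Hm) (I0_mul Hy Hm) addr0.
Qed.

Lemma I0_mull s x : x \in I0 M -> s * x \in I0 M.
Proof.
move=> Hx; rewrite inE M_mul ?I0_M //=; apply/forall_inP=> m Hm.
by rewrite -mulrA (I0_mul Hx Hm) mulr0.
Qed.

Lemma I0_opp x : x \in I0 M -> - x \in I0 M.
Proof. by move=> Hx; rewrite -mulN1r; exact: I0_mull. Qed.

Lemma I0_sub x y : x \in I0 M -> y \in I0 M -> x - y \in I0 M.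
Proof. by move=> Hx Hy; apply: I0_add => //; exact: I0_opp. Qed.

Lemma I0_mulM x m : x \in I0 M -> m \in M -> m * x = 0.
Proof. by move=> Hx Hm; rewrite mulrC; exact: I0_mul. Qed.


Variable K : {group {unit R}}.
Hypothesis Hpure : pure K.

Definition inJb (z : R) := [exists k in U0 K M, val k == 1 + z].

Lemma inJ_I0 z : inJb z -> z \in I0 M.
Proof.
case/exists_inP=> k; rewrite inE => /andP[_ Hk] /eqP Hv.
by move: Hk; rewrite Hv addrC addKr.
Qed.

Lemma one_U0 : (1%g : {unit R}) \in U0 K M.
Proof. by rewrite inE group1 /= subrr I0_0. Qed.

Lemma inJ0 : inJb 0.
Proof. by apply/exists_inP; exists 1%g; rewrite ?one_U0 //= addr0. Qed.

Lemma inJ_add i j : inJb i -> inJb j -> inJb (i + j).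
Proof.
move=> Hi Hj; have Ii := inJ_I0 Hi; have Ij := inJ_I0 Hj.
case/exists_inP: Hi => a; rewrite inE => /andP[Ka _] /eqP Ha.
case/exists_inP: Hj => b; rewrite inE => /andP[Kb _] /eqP Hb.
have Hv : val (a * b)%g = 1 + (i + j).
  rewrite FinRing.val_unitM Ha Hb mulrDl mul1r mulrDr mulr1 (I0_mul Ii (I0_M Ij)) addr0.
  by rewrite -addrA (addrC j).
apply/exists_inP; exists (a * b)%g; last by rewrite Hv.
by rewrite inE groupM // Hv /= addrC addKr; exact: I0_add.
Qed.

Lemma inJ_opp i : inJb i -> inJb (- i).
Proof.
move=> Hi; have Ii := inJ_I0 Hi.
case/exists_inP: Hi => a; rewrite inE => /andP[Ka _] /eqP Ha.
have H1 : (1 + i) * (1 - i) = 1.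
  by rewrite mulrDl mul1r mulrDr mulr1 mulrN (I0_mul Ii (I0_M Ii)) subr0 subrK.
have Hu : (1 + i) \is a GRing.unit by apply/unitrPr; exists (1 - i).
have Hv : val (a^-1)%g = 1 + - i.
  by rewrite FinRing.val_unitV Ha -[RHS](mulKr Hu) H1 mulr1.
apply/exists_inP; exists (a^-1)%g; last by rewrite Hv.
by rewrite inE groupV Ka Hv /= addrC addKr; exact: I0_opp.
Qed.

Section Scheme.
Variable P : {set {set R * R}}.
Hypothesis Hs : is_scheme P.
Hypothesis Hle : scheme_le (cyc K) P.
Hypothesis Hd : forall x, is_relation P (diag_on [set y | E0 M x y]).

Definition Srel (r : R) : {set R * R} :=
  [set p : R * R | p.2 - p.1 \in [set r * val k | k in U0 K M]].

Lemma Hpart : partition P [set: R * R].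
Proof. by case: Hs. Qed.

Lemma step_common B x y x' y' r : B \in P -> (x, y) \in B -> (x', y') \in B ->
  y - x \in [set r * val k | k in K] ->
  (y' - x' \in [set r * val k | k in K]) /\ (y' - x') - (y - x) \in I0 M.
Proof.
move=> HB Hxy Hxy' Hd0; split.
  have HT : is_relation P [set p : R * R | p.2 - p.1 \in [set r * val k | k in K]].
    apply: Hle.
    exists ([set [set p : R * R | p.2 - p.1 \in [set r * val k | k in K]]]); last by rewrite cover1.
    by rewrite sub1set; apply/imsetP; exists r.
  have := rel_basis Hpart HT HB Hxy; rewrite inE /= => /(_ Hd0) /subsetP /(_ _ Hxy').
  by rewrite inE.
have Ex : (x, x) \in diag_on [set z | E0 M x z].
  by apply/imsetP; exists x => //; rewrite inE /E0 subrr I0_0.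
have Ey : (y, y) \in diag_on [set z | E0 M y z].
  by apply/imsetP; exists y => //; rewrite inE /E0 subrr I0_0.
have [w1 [H1 _]] := exist_comp Hs (Hd x) (rel_setT Hpart) HB Hxy Hxy' Ex (in_setT (x, y)).
have [w2 [_ H2]] := exist_comp Hs (rel_setT Hpart) (Hd y) HB Hxy Hxy' (in_setT (x, y)) Ey.
case/imsetP: H1 => a; rewrite inE /E0 => Ha [Hxa _].
case/imsetP: H2 => b; rewrite inE /E0 => Hb [_ Hyb].
rewrite Hxa Hyb.
have -> : b - a - (y - x) = (b - y) - (a - x) by ring.
exact: I0_sub.
Qed.

Lemma U0_K k : k \in U0 K M -> k \in K.
Proof. by rewrite inE => /andP[]. Qed.

Lemma unit_case r B x y x' y' : r \is a GRing.unit -> B \in P ->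
  (x, y) \in B -> (x', y') \in B -> (x, y) \in Srel r -> (x', y') \in Srel r.
Proof.
move=> Hr HB Hxy Hxy'; rewrite !inE /= => /imsetP [a Ha Hda].
have HdK : y - x \in [set r * val k | k in K] by rewrite Hda; apply: imset_f; exact: U0_K.
have [/imsetP [k Hk Hdk] HI] := step_common HB Hxy Hxy' HdK.
have Ha1 : val a - 1 \in I0 M by move: Ha; rewrite inE => /andP[].
rewrite Hda Hdk in HI.
apply/imsetP; exists k => //; rewrite inE Hk /=.
have -> : val k - 1 = r^-1 * (r * val k - r * val a) + (val a - 1).
  by rewrite -mulrBr mulKr // addrA subrK.
by apply: I0_add => //; exact: I0_mull.
Qed.

Lemma Srel_rel u : u \is a GRing.unit -> is_relation P (Srel u).
Proof.
move=> Hu; apply: (rel_crit Hpart) => B HB [x y] [x' y'] Hp Hq.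
exact: (unit_case Hu HB Hp Hq).
Qed.

Lemma nonunit_case r B x y x' y' : ~~ (r \is a GRing.unit) -> B \in P ->
  (x, y) \in B -> (x', y') \in B -> (x, y) \in Srel r -> (x', y') \in Srel r.
Proof.
move=> Hr HB Hxy Hxy'; rewrite !inE /= => /imsetP [a Ha Hda].
have HrM := nonunit_inM Hr.
have Ha1 : val a - 1 \in I0 M by move: Ha; rewrite inE => /andP[].
have Hra : r * val a = r.
  have : r * (val a - 1) = 0 by exact: I0_mulM.
  by rewrite mulrBr mulr1 => /eqP; rewrite subr_eq0 => /eqP.
have HdK : y - x \in [set r * val k | k in K] by rewrite Hda; apply: imset_f; exact: U0_K.
have [/imsetP [k Hk Hdk] HI] := step_common HB Hxy Hxy' HdK.
rewrite Hra in Hda.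
rewrite Hda in HI.
pose e := y' - x' - r.
pose L := [set e' | [forall s, inJb (s * e')]].
have HL : is_ideal L.
  split.
  - by rewrite inE; apply/forallP=> s; rewrite mulr0 inJ0.
  - move=> a1 b1; rewrite !inE => /forallP H1 /forallP H2; apply/forallP=> s.
    by rewrite mulrDr; apply: inJ_add.
  - move=> t a1; rewrite !inE => /forallP H1; apply/forallP=> s.
    by rewrite mulrA.
have HL1 : forall z, z \in L -> exists2 u, u \in K & val u = 1 + z.
  move=> z; rewrite inE => /forallP /(_ 1); rewrite mul1r.
  by case/exists_inP=> k0 Hk0 /eqP Hv; exists k0 => //; exact: U0_K.
have HeL : e \in L.
  rewrite inE; apply/forallP=> s.
  have [Hs'|Hs'] := boolP (s \is a GRing.unit); last first.
    by rewrite (I0_mulM HI (nonunit_inM Hs')) inJ0.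
  pose u := s^-1.
  have Hu : u \is a GRing.unit by rewrite unitrV.
  have Hru := sub_unit HrM Hu.
  have H1 : (x, x + u) \in Srel u.
    by rewrite inE /=; apply/imsetP; exists 1%g; rewrite ?one_U0 //= addrAC subrr add0r mulr1.
  have H2 : (x + u, y) \in Srel (r - u).
    rewrite inE /=; apply/imsetP; exists 1%g; rewrite ?one_U0 //= mulr1.
    by rewrite opprD addrA Hda.
  have [w [Hw1 Hw2]] := exist_comp Hs (Srel_rel Hu) (Srel_rel Hru) HB Hxy Hxy' H1 H2.
  move: Hw1 Hw2; rewrite !inE /= => /imsetP [a1 Ha1' Hw1] /imsetP [b1 Hb1 Hw2].
  have Ji : inJb (val a1 - 1) by apply/exists_inP; exists a1 => //; rewrite addrC subrK.
  have Jj : inJb (val b1 - 1) by apply/exists_inP; exists b1 => //; rewrite addrC subrK.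
  have Hj0 : r * (val b1 - 1) = 0 by apply: I0_mulM => //; exact: inJ_I0.
  have -> : s * e = (s * u) * ((val a1 - 1) - (val b1 - 1)) + s * (r * (val b1 - 1)).
    have -> : e = (w - x') + (y' - w) - r by rewrite /e; ring.
    rewrite Hw1 Hw2.
    have Hid : forall A0 B0 U : R, s * (U * A0 + (r - U) * B0 - r) = s * U * (A0 - 1 - (B0 - 1)) + s * (r * (B0 - 1)).
      by move=> A0 B0 U; ring.
    exact: Hid.
  by rewrite Hj0 mulr0 addr0 mulrV // mul1r; apply: inJ_add => //; exact: inJ_opp.
have := Hpure HL HL1; move/setP/(_ e); rewrite HeL inE => /esym/eqP.
move=> He0; have He : e = 0 := He0.
move: He; rewrite /e => /eqP; rewrite subr_eq0 => /eqP ->.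
by apply/imsetP; exists 1%g; rewrite ?one_U0 //= mulr1.
Qed.

End Scheme.
End Loc.

Unset Implicit Arguments.

Theorem theorem2p5 (R : finComUnitRingType) (M : {set R})
  (Hlocal : forall J : {set R}, is_maximal_ideal J <-> J = M)
  (K : {group {unit R}}) (Hpure : pure K) :
  CE_ge (cyc K) (E0 M) (cyc (U0 K M)).
Proof.
move=> P [Hs Hle Hd] S [Q HQ ->].
have Hp : partition P [set: R * R] by case: Hs.
apply: rel_crit Hp _ => B HB [x y] [x' y'] Hxy Hxy' /bigcupP [T HT HpT].
apply/bigcupP; exists T => //.
have /imsetP [r _ HTr] := subsetP HQ _ HT.
move: HpT; rewrite HTr => HpT.
have [Hr|Hr] := boolP (r \is a GRing.unit).
  exact: (unit_case Hlocal Hs Hle Hd Hr HB Hxy Hxy').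
exact: (nonunit_case Hlocal Hpure Hs Hle Hd Hr HB Hxy Hxy').
Qed.
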